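(* Let $U=\{(x,f(x)):x\in\mathbb{F}_{q^n}\}$ and $W=\{(x,g(x)):x\in\mathbb{F}_{q^n}\}$, where $f,g$ are $q$-polynomials (so these are $n$-dimensional $\mathbb{F}_q$-subspaces of $\mathbb{F}_{q^n}^2$ with $\langle(0,1)\rangle\notin L_U,L_W$), and let $A,B$ be the Dickson matrices of $f,g$. Then $L_U=L_W$ if and only if $A$ and $B$ have equal corresponding principal minors, i.e. $\det A[\alpha|\alpha]=\det B[\alpha|\alpha]$ for all nonempty $\alpha\subseteq\mathbb{Z}_n$.
   Context: $q$ a prime power, $n\ge2$; $L_U=\{\langle u\rangle_{\mathbb{F}_{q^n}}:u\in U\setminus\{0\}\}\subseteq\mathrm{PG}(1,q^n)$. A $q$-polynomial is $f(x)=\sum_{j=0}^{n-1}a_jx^{q^j}\in\mathbb{F}_{q^n}[x]$; its Dickson matrix is the $n\times n$ matrix $A$ indexed by $\mathbb{Z}_n$ with $A[i|j]=a_{j-i}^{q^i}$ (indices mod $n$). $A[\alpha|\beta]$ is the submatrix with rows in $\alpha$ and columns in $\beta$. *)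

(* Defs.v *)
From HB Require Import structures.
From mathcomp Require Import all_boot all_order all_algebra all_field.
Set Implicit Arguments. Unset Strict Implicit. Unset Printing Implicit Defensive.
Import GRing.Theory.
Local Open Scope ring_scope.

Definition qpoly_eval (L : finFieldType) (q n : nat) (a : 'I_n -> L) (x : L) : L :=
  \sum_(j < n) a j * x ^+ (q ^ j).

Definition ord_subn (n : nat) (j i : 'I_n) : 'I_n :=
  Ordinal (ltn_pmod (j + (n - i))%N (leq_ltn_trans (leq0n i) (ltn_ord i))).

Definition dickson_mx (L : finFieldType) (q n : nat) (a : 'I_n -> L) : 'M[L]_n :=
  \matrix_(i < n, j < n) (a (ord_subn j i)) ^+ (q ^ i).

Definition principal_submx (R : Type) (n : nat) (A : 'M[R]_n) (alpha : {set 'I_n})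
  : 'M[R]_#|alpha| :=
  mxsub (fun k : 'I_#|alpha| => enum_val k) (fun k : 'I_#|alpha| => enum_val k) A.

Definition graph_set (L : finFieldType) (f : L -> L) : {set L * L} :=
  [set (x, f x) | x : L].

Definition proj_point (L : finFieldType) (u : L * L) : {set L * L} :=
  [set (c * u.1, c * u.2) | c : L].

Definition linset (L : finFieldType) (U : {set L * L}) : {set {set L * L}} :=
  [set proj_point u | u in U :\ (0, 0)].

(* Main.v *)
Require Import Defs.
From HB Require Import structures.
From mathcomp Require Import all_boot all_order all_algebra all_field.
From mathcomp Require Import fingroup perm zify.
Set Implicit Arguments. Unset Strict Implicit. Unset Printing Implicit Defensive.
Import GRing.Theory.
Local Open Scope ring_scope.

Section Lift.
Variables (n : nat) (J : {set 'I_n}).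
Local Notation k := #|J|.
Local Notation h := (fun j : 'I_k => @enum_val _ (pred_of_set J) j).

Definition pk (i : 'I_n) : option 'I_k := [pick j : 'I_k | h j == i].

Lemma h_inj : injective h.
Proof. exact: enum_val_inj. Qed.

Lemma hJ j : h j \in J.
Proof. exact: enum_valP. Qed.

Lemma pk_h j : pk (h j) = Some j.
Proof.
rewrite /pk; case: pickP => [j' /eqP /h_inj -> // | /(_ j)]; by rewrite eqxx.
Qed.

Lemma pk_out i : i \notin J -> pk i = None.
Proof.
move=> iJ; rewrite /pk; case: pickP => // j /eqP hj; by rewrite -hj hJ in iJ.
Qed.

Lemma in_h i : i \in J -> exists j, i = h j.
Proof. move=> iJ; exists (enum_rank_in iJ i); by rewrite enum_rankK_in. Qed.

Definition liftf (t : 'S_k) (i : 'I_n) : 'I_n :=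
  if pk i is Some j then h (t j) else i.

Lemma liftf_h t j : liftf t (h j) = h (t j).
Proof. by rewrite /liftf pk_h. Qed.

Lemma liftf_out t i : i \notin J -> liftf t i = i.
Proof. by move=> iJ; rewrite /liftf pk_out. Qed.

Lemma liftf_inj t : injective (liftf t).
Proof.
move=> i1 i2.
case: (boolP (i1 \in J)) => [/in_h [j1 ->] | o1]; case: (boolP (i2 \in J)) => [/in_h [j2 ->] | o2].
- by rewrite !liftf_h => /h_inj /perm_inj ->.
- by rewrite liftf_h (liftf_out _ o2) => e; rewrite -e hJ in o2.
- by rewrite liftf_h (liftf_out _ o1) => e; rewrite e hJ in o1.
- by rewrite !liftf_out.
Qed.

Definition liftp (t : 'S_k) : 'S_n := perm (@liftf_inj t).

Lemma liftp_h t j : liftp t (h j) = h (t j).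
Proof. by rewrite permE liftf_h. Qed.

Lemma liftp_out t i : i \notin J -> liftp t i = i.
Proof. by move=> iJ; rewrite permE liftf_out. Qed.

Lemma liftp_ext (s1 s2 : 'S_n) :
  (forall j, s1 (h j) = s2 (h j)) -> (forall i, i \notin J -> s1 i = s2 i) -> s1 = s2.
Proof.
move=> H1 H2; apply/permP => i; case: (boolP (i \in J)) => [/in_h [j ->] | o]; auto.
Qed.

Lemma liftpM t1 t2 : liftp (t1 * t2)%g = (liftp t1 * liftp t2)%g.
Proof.
apply: liftp_ext => [j | i o]; first by rewrite !permM !liftp_h permM.
by rewrite permM !liftp_out.
Qed.

Lemma liftp1 : liftp 1%g = 1%g.
Proof. by apply: liftp_ext => [j | i o]; rewrite ?liftp_h ?liftp_out // !perm1. Qed.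

Lemma liftp_tperm x y : liftp (tperm x y) = tperm (h x) (h y).
Proof.
apply: liftp_ext => [j | i o].
  rewrite liftp_h; case: tpermP => [->|->|njx njy]; first by rewrite tpermL.
    by rewrite tpermR.
  by rewrite tpermD // (inj_eq h_inj) eq_sym; apply/eqP.
rewrite liftp_out // tpermD //; apply: contraNneq o => <-; exact: hJ.
Qed.

Lemma liftp_inj : injective liftp.
Proof.
move=> t1 t2 e; apply/permP => j; apply: h_inj; by rewrite -!liftp_h e.
Qed.

Lemma odd_liftp t : odd_perm (liftp t) = odd_perm t.
Proof.
have [ts -> dts] := prod_tpermP t.
have -> : liftp (\prod_(u <- ts) tperm u.1 u.2)%g =
   (\prod_(u <- [seq (h v.1, h v.2) | v <- ts]) tperm u.1 u.2)%g.
  rewrite big_map; rewrite (big_morph liftp liftpM liftp1).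
  by apply: eq_bigr => u _; rewrite liftp_tperm.
rewrite !odd_perm_prod ?size_map //.
rewrite all_map; apply: sub_all dts => u /=; by rewrite (inj_eq h_inj).
Qed.

Lemma liftp_onto (s : 'S_n) : (forall i, i \notin J -> s i = i) -> exists t, s = liftp t.
Proof.
move=> fix_s.
have sJ : forall i, i \in J -> s i \in J.
  move=> i iJ; apply/negPn/negP => o.
  have := fix_s _ o => /perm_inj e; by rewrite e iJ in o.
pose tf (j : 'I_k) := enum_rank_in (hJ j) (s (h j)).
have tfK j : h (tf j) = s (h j) by rewrite /tf enum_rankK_in // sJ // hJ.
have tf_inj : injective tf.
  by move=> j1 j2 e; apply: h_inj; apply: (@perm_inj _ s); rewrite -!tfK e.
exists (perm tf_inj); apply: liftp_ext => [j | i o].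
  by rewrite liftp_h permE tfK.
by rewrite liftp_out // fix_s.
Qed.
End Lift.

Lemma detBJ (R : comRingType) n (A : 'M[R]_n) (J : {set 'I_n}) :
  \det (\matrix_(i, j) (if i \in J then A i j else (i == j)%:R)) =
  \det (principal_submx A J).
Proof.
rewrite [LHS]/determinant [RHS]/determinant.
set B := \matrix_(i, j) _.
rewrite (bigID (fun s : 'S_n => s \in [set liftp t | t : 'S_#|J|])) /=.
rewrite [X in _ + X]big1 ?addr0; last first.
  move=> s sN.
  case: (pickP (fun i => (i \notin J) && (s i != i))) => [i /andP [iJ si] | H].
    rewrite (bigD1 i) //= mxE (negbTE iJ) eq_sym (negbTE si) mul0r mulr0 //.
  have [t st] : exists t : 'S_#|J|, s = liftp t.
    apply: (@liftp_onto _ J) => i iJ; have := H i; rewrite iJ /=.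
    by move/negbFE/eqP.
  by rewrite st imset_f ?inE in sN.
rewrite big_imset /=; last by move=> t1 t2 _ _; exact: liftp_inj.
apply: eq_bigr => t _; rewrite odd_liftp; congr (_ * _).
rewrite (bigID (mem J)) /= [X in _ * X]big1 ?mulr1; last first.
  by move=> i iJ; rewrite mxE (negbTE iJ) liftp_out // eqxx.
rewrite big_enum_val /=.
apply: eq_bigr => j _; rewrite !mxE enum_valP liftp_h //.
Qed.

Lemma prodDA (R : comRingType) (I : finType) (F G : I -> R) :
  \prod_i (F i + G i) = \sum_(J : {set I}) \prod_i (if i \in J then F i else G i).
Proof. exact: bigA_distr. Qed.

Lemma det_add_diag (R : comRingType) n (A : 'M[R]_n) (d : 'I_n -> R) :
  \det (A + diag_mx (\row_i d i)) =
  \sum_(J : {set 'I_n}) \det (principal_submx A J) * \prod_(i in ~: J) d i.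
Proof.
under eq_bigr => J _ do rewrite -detBJ.
rewrite [LHS]/determinant.
transitivity (\sum_(s : 'S_n) (-1) ^+ s *
   \sum_(J : {set 'I_n}) \prod_i (if i \in J then A i (s i) else d i *+ (i == s i))).
  apply: eq_bigr => s _; congr (_ * _).
  rewrite (eq_bigr (fun i => A i (s i) + d i *+ (i == s i))); last first.
    by move=> i _; rewrite !mxE.
  by rewrite prodDA.
apply: etrans; first (apply: eq_bigr => s _; exact: mulr_sumr).
rewrite exchange_big /=; apply: eq_bigr => J _.
rewrite mulrC [\det _]/determinant mulr_sumr; apply: eq_bigr => s _.
rewrite mulrCA; congr (_ * _).
rewrite (big_mkcond (fun i => i \in ~: J)) -big_split /=.
apply: eq_bigr => i _; rewrite !mxE inE.
by case: (i \in J) => /=; rewrite ?mul1r // mulr_natr.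
Qed.

Lemma ord_subn_val n (j i : 'I_n) : val (ord_subn j i) = ((j + (n - i)) %% n)%N.
Proof. by []. Qed.

Lemma ord_subnK n (j i : 'I_n) : ((ord_subn j i + i) %% n)%N = j.
Proof.
rewrite ord_subn_val modnDml -addnA subnK ?(ltnW (ltn_ord i)) //.
by rewrite modnDr modn_small.
Qed.

Lemma ord_addI n (i k1 k2 : 'I_n) : ((k1 + i) %% n = (k2 + i) %% n)%N -> k1 = k2.
Proof.
move=> /eqP; rewrite eqn_modDr !modn_small // => /eqP e; exact: val_inj.
Qed.

Definition addo n (n0 : (0 < n)%N) (k i : 'I_n) : 'I_n := Ordinal (ltn_pmod (k + i) n0).

Lemma addoK n (n0 : (0 < n)%N) (k i : 'I_n) : ord_subn (addo n0 k i) i = k.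
Proof. apply: (@ord_addI _ i); by rewrite ord_subnK. Qed.

Lemma subnoK n (n0 : (0 < n)%N) (j i : 'I_n) : addo n0 (ord_subn j i) i = j.
Proof. apply: val_inj; by rewrite /= ord_subnK. Qed.

Lemma ord_subn0 n (j i : 'I_n) : (val (ord_subn j i) == 0%N) = (j == i).
Proof.
apply/eqP/eqP => [e | ->].
  apply: val_inj => /=; by rewrite -[in LHS](ord_subnK j i) e add0n modn_small.
by rewrite ord_subn_val subnKC ?modnn // ltnW.
Qed.

Section Frob.
Variables (L : finFieldType) (q n : nat).
Hypothesis q1 : (1 < q)%N.
Hypothesis qD : forall x y : L, (x + y) ^+ q = x ^+ q + y ^+ q.
Hypothesis xqn : forall x : L, x ^+ (q ^ n) = x.

Lemma q0 : (0 < q)%N. Proof. exact: ltnW. Qed.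

Lemma frobD i (x y : L) : (x + y) ^+ (q ^ i) = x ^+ (q ^ i) + y ^+ (q ^ i).
Proof. elim: i x y => [|i IH] x y; first by rewrite expn0 !expr1. by rewrite expnS !exprM qD IH. Qed.

Lemma frob0 i : (0 : L) ^+ (q ^ i) = 0.
Proof. by rewrite expr0n expn_eq0 eqn0Ngt q0. Qed.

Lemma frobN i (x : L) : (- x) ^+ (q ^ i) = - x ^+ (q ^ i).
Proof.
apply/eqP; rewrite -addr_eq0 -frobD addNr frob0 //.
Qed.

Lemma frobB i (x y : L) : (x - y) ^+ (q ^ i) = x ^+ (q ^ i) - y ^+ (q ^ i).
Proof. by rewrite frobD frobN. Qed.

Lemma frob_sum i (I : Type) (r : seq I) (P : pred I) (F : I -> L) :
  (\sum_(j <- r | P j) F j) ^+ (q ^ i) = \sum_(j <- r | P j) F j ^+ (q ^ i).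
Proof.
apply: (big_morph (fun x : L => x ^+ (q ^ i))) => [x y|]; [exact: frobD | exact: frob0].
Qed.

Lemma frob_comp i j (x : L) : (x ^+ (q ^ i)) ^+ (q ^ j) = x ^+ (q ^ (i + j)).
Proof. by rewrite -exprM -expnD. Qed.

Lemma xq_mod m (x : L) : x ^+ (q ^ m) = x ^+ (q ^ (m %% n)).
Proof.
rewrite {1}(divn_eq m n); elim: (m %/ n)%N => [|t IH]; first by rewrite mul0n add0n.
by rewrite mulSn -addnA expnD exprM xqn.
Qed.

Lemma frobn (x : L) : x ^+ (q ^ n) = x. Proof. exact: xqn. Qed.

Lemma dickson_v (a : 'I_n -> L) (x : L) (i : 'I_n) :
  \sum_j dickson_mx q a i j * x ^+ (q ^ j) = (qpoly_eval q a x) ^+ (q ^ i).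
Proof.
have n0 : (0 < n)%N by apply: leq_ltn_trans (ltn_ord i).
rewrite /qpoly_eval frob_sum.
rewrite (reindex (fun k => addo n0 k i)) /=; last first.
  by exists (fun j => ord_subn j i) => j _; [rewrite addoK | rewrite subnoK].
apply: eq_bigr => k _; rewrite mxE addoK exprMn frob_comp.
by rewrite [in RHS]xq_mod addnC.
Qed.

End Frob.

Definition fq (L : finFieldType) (q : nat) (q1 : (1 < q)%N)
  (qD : forall x y : L, (x + y) ^+ q = x ^+ q + y ^+ q) : L -> L := fun x => x ^+ q.

Lemma fq_nmod (L : finFieldType) q q1 qD : nmod_morphism (@fq L q q1 qD).
Proof.
split; rewrite /fq; last exact: qD.
by rewrite expr0n eqn0Ngt (ltnW q1).
Qed.

Lemma fq_monoid (L : finFieldType) q q1 qD : monoid_morphism (@fq L q q1 qD).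
Proof. split; rewrite /fq; [exact: expr1n | move=> x y; exact: exprMn]. Qed.

HB.instance Definition _ (L : finFieldType) q q1 qD :=
  GRing.isNmodMorphism.Build L L (@fq L q q1 qD) (@fq_nmod L q q1 qD).
HB.instance Definition _ (L : finFieldType) q q1 qD :=
  GRing.isMonoidMorphism.Build L L (@fq L q q1 qD) (@fq_monoid L q q1 qD).

Section Dick.
Variables (L : finFieldType) (q n : nat).
Hypothesis q1 : (1 < q)%N.
Hypothesis n0 : (0 < n)%N.
Hypothesis qD : forall x y : L, (x + y) ^+ q = x ^+ q + y ^+ q.
Hypothesis xqn : forall x : L, x ^+ (q ^ n) = x.
Hypothesis cardL : #|L| = (q ^ n)%N.

Lemma ord_subnS (j i : 'I_n) : ord_subn (ordS j) (ordS i) = ord_subn j i.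
Proof.
apply: (@ord_addI _ (ordS i)); rewrite ord_subnK /=.
by rewrite modnDmr modnDml addnS -addnA subnK ?(ltnW (ltn_ord i)) // -addSn modnDr.
Qed.

Lemma det_dickson_q (a : 'I_n -> L) :
  (\det (dickson_mx q a)) ^+ q = \det (dickson_mx q a).
Proof.
set D := dickson_mx q a.
pose s : 'S_n := perm (@ordS_inj n).
have -> : (\det D) ^+ q = @fq L q q1 qD (\det D) by [].
rewrite -det_map_mx.
have -> : map_mx (@fq L q q1 qD) D = row_perm s (col_perm s D).
  apply/matrixP => i j; rewrite !mxE !permE /fq ord_subnS -exprM -expnSr.
  by rewrite (xq_mod xqn i.+1).
rewrite row_permE col_permE !det_mulmx !det_perm odd_permV.
by rewrite mulrCA -expr2 sqrr_sign mulr1.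
Qed.

Lemma qpolyB (a : 'I_n -> L) x y :
  qpoly_eval q a (x - y) = qpoly_eval q a x - qpoly_eval q a y.
Proof.
rewrite /qpoly_eval -sumrB; apply: eq_bigr => j _.
by rewrite (frobB q1 qD) mulrBr.
Qed.

Lemma qpoly0 (a : 'I_n -> L) : qpoly_eval q a 0 = 0.
Proof.
rewrite /qpoly_eval big1 // => j _; by rewrite (frob0 L q1) mulr0.
Qed.

Lemma dickson_det0 (a : 'I_n -> L) :
  (\det (dickson_mx q a) == 0) = [exists x : L, (x != 0) && (qpoly_eval q a x == 0)].
Proof.
set D := dickson_mx q a; set h := qpoly_eval q a.
apply/idP/idP => [/det0P [w w0 wD] | /existsP [x /andP [x0 /eqP hx]]]; last first.
  apply/eqP; apply: contraNeq x0 => dD.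
  pose v : 'cV[L]_n := \col_j x ^+ (q ^ j).
  have Dv : D *m v = 0.
    apply/colP => i; rewrite [LHS]mxE [RHS]mxE.
    under eq_bigr => j _ do rewrite [v j 0]mxE.
    by rewrite (dickson_v q1 qD xqn) -/h hx (frob0 L q1).
  have uD : D \in unitmx by rewrite unitmxE unitfE.
  have : v = 0 by rewrite -(mulKmx uD v) Dv mulmx0.
  move/colP/(_ (Ordinal n0)); rewrite !mxE expn0 expr1 => ->; by [].
apply: contraT => /existsPn Hno.
have h_inj : injective h.
  move=> x y e; apply/eqP; rewrite -subr_eq0; apply/negPn/negP => xy.
  by move: (Hno (x - y)); rewrite xy /h qpolyB -/h e subrr eqxx.
have [hinv hK hK'] := injF_bij h_inj.
have [i0 wi0] : exists i0, w 0 i0 != 0.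
  case: (pickP (fun i => w 0 i != 0)) => [i0 wi0 | H]; first by exists i0.
  by case/eqP: w0; apply/rowP => i; rewrite mxE; apply/eqP/negbFE/H.
pose Q : {poly L} := \sum_(i < n) w 0 i *: 'X^(q ^ i).
have rootQ y : root Q y.
  rewrite /root /Q horner_sum.
  under eq_bigr => i _ do rewrite hornerZ hornerXn.
  rewrite -(hK' y) -[h _]/(qpoly_eval q a _).
  under eq_bigr => i _ do rewrite -(dickson_v q1 qD xqn) mulr_sumr.
  rewrite exchange_big /= big1 // => j _.
  under eq_bigr => i _ do rewrite mulrA.
  rewrite -mulr_suml.
  have := congr1 (fun M : 'rV_n => M 0 j) wD; rewrite !mxE => ->.
  by rewrite mul0r.
have Q0 : Q != 0.
  apply/eqP => /(congr1 (fun p : {poly L} => p`_(q ^ i0))).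
  rewrite coef0 /Q coef_sum (bigD1 i0) //= coefZ coefXn eqxx mulr1 big1 ?addr0.
    by move/eqP; rewrite (negbTE wi0).
  move=> i ii0; rewrite coefZ coefXn.
  have -> : (q ^ i0 == q ^ i)%N = false.
    by apply/negbTE; apply: contra ii0 => /eqP /(expnI q1) e; apply/eqP/val_inj.
  by rewrite mulr0.
have szQ : (size Q <= (q ^ n.-1).+1)%N.
  rewrite /Q; apply: leq_trans (size_sum _ _ _) _.
  apply/bigmax_leqP => i _; apply: leq_trans (size_scale_leq _ _) _.
  rewrite size_polyXn ltnS leq_exp2l //; by rewrite -ltnS prednK.
have := max_poly_roots Q0 (introT allP (fun y _ => rootQ y)) (enum_uniq L).
rewrite -cardE cardL => hlt.
have := leq_trans hlt szQ.
have -> : (q ^ n = q * q ^ n.-1)%N by rewrite -expnS prednK.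
have : (0 < q ^ n.-1)%N by rewrite expn_gt0 (ltnW q1).
move: (q ^ n.-1)%N => t t0; rewrite ltnS => H.
have H2 : (2 * t <= q * t)%N by rewrite leq_mul2r q1 orbT.
have := leq_trans H2 H; move: t0; clear; lia.
Qed.

End Dick.

Lemma digits_inj q (q1 : (1 < q)%N) m (b b' : nat -> bool) :
  (\sum_(i < m) b i * q ^ i = \sum_(i < m) b' i * q ^ i)%N ->
  forall i, (i < m)%N -> b i = b' i.
Proof.
elim: m b b' => [//|m IH] b b'.
rewrite !big_ord_recl /= !expn0 !muln1.
have hsh : forall c : nat -> bool, (\sum_(i < m) c (bump 0 i) * q ^ bump 0 i =
    (\sum_(i < m) c i.+1 * q ^ i) * q)%N.
  move=> c; rewrite big_distrl /=; apply: eq_bigr => i _.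
  by rewrite /bump /= add1n expnS mulnCA mulnC.
rewrite !hsh => e.
have bq : forall c : bool, (c < q)%N by case; rewrite //= ltnW.
have e0 : b 0%N = b' 0%N.
  have := congr1 (fun t => (t %% q)%N) e; rewrite /= !(addnC (nat_of_bool _)).
  rewrite !modnMDl !modn_small ?bq //; by case: (b 0%N); case: (b' 0%N).
have e1 := congr1 (fun t => (t %/ q)%N) e; rewrite /= !(addnC (nat_of_bool _)) in e1.
rewrite !divnMDl ?(ltnW q1) // !divn_small ?bq // !addn0 in e1.
case => [//|i] Hi; exact: (IH (fun j => b j.+1) (fun j => b' j.+1) e1 i Hi).
Qed.

Definition eset q n (T : {set 'I_n}) : nat := (\sum_(i in T) q ^ i)%N.

Lemma eset_inj q n (q1 : (1 < q)%N) : injective (@eset q n).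
Proof.
move=> S T e; apply/setP => o.
pose bS (R : {set 'I_n}) (i : nat) := [exists o' : 'I_n, (val o' == i) && (o' \in R)].
have bSo R (o' : 'I_n) : bS R o' = (o' \in R).
  apply/existsP/idP => [[o'' /andP [/eqP /val_inj -> //]] | Ho]; exists o'; by rewrite eqxx.
have eE R : eset q R = (\sum_(i < n) bS R i * q ^ i)%N.
  rewrite /eset (big_mkcond (fun i => i \in R)) /=; apply: eq_bigr => i _.
  by rewrite bSo; case: (i \in R); rewrite ?mul1n ?mul0n.
rewrite -!bSo; apply: (digits_inj q1 (m := n)); [by rewrite -!eE | exact: ltn_ord].
Qed.

Lemma eset_leT q n (T : {set 'I_n}) : (eset q T <= eset q [set: 'I_n])%N.
Proof.
rewrite /eset [X in (_ <= X)%N](big_mkcond (fun i => i \in setT)) (big_mkcond (fun i => i \in T)).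
apply: leq_sum => i _; by rewrite in_setT; case: (i \in T).
Qed.

Lemma esetT q n : eset q (setT : {set 'I_n}) = (\sum_(i < n) q ^ i)%N.
Proof. by rewrite /eset; apply: eq_bigl => i; rewrite in_setT. Qed.

Lemma geom q n (q0 : (0 < q)%N) : (q.-1 * \sum_(i < n) q ^ i).+1 = (q ^ n)%N.
Proof.
elim: n => [|n IH]; first by rewrite big_ord0 muln0.
have aux t : (t + q.-1 * t = q * t)%N by case: (q) q0 => [|r] //= _; rewrite mulSn.
by rewrite big_ord_recr /= mulnDr -addSn IH expnS aux.
Qed.

Lemma det0mx (R : comRingType) m (A : 'M[R]_m) : m = 0%N -> \det A = 1.
Proof. move=> Hm; move: A; rewrite Hm => A; exact: det_mx00. Qed.

Lemma poly_pow_eq (F : fieldType) (R S : {poly F}) (E m : nat) (c : F) :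
  size R = E.+1 -> size S = E.+1 -> lead_coef R = c -> lead_coef S = c ->
  c != 0 -> (m.+1%:R : F) != 0 -> R ^+ m.+1 = S ^+ m.+1 -> R = S.
Proof.
move=> sR sS lR lS c0 m0 e.
have R0 : R != 0 by rewrite -size_poly_eq0 sR.
have S0 : S != 0 by rewrite -size_poly_eq0 sS.
move/eqP: e; rewrite -subr_eq0 subrXX mulf_eq0 subr_eq0 => /orP [/eqP //|].
set T := \sum_(i < m.+1) _; move=> /eqP T0; exfalso.
have tsz a b : size (R ^+ a * S ^+ b) = (E * (a + b)).+1.
  have sz (P : {poly F}) k : P != 0 -> size P = E.+1 -> size (P ^+ k) = (E * k).+1.
    move=> P0 sP; have pk : P ^+ k != 0 := expf_neq0 k P0.
    by rewrite -(prednK (_ : 0 < size (P ^+ k))%N) ?size_poly_gt0 // size_exp sP.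
  rewrite size_mul ?expf_neq0 // (sz R) // (sz S) //= mulnDr =>/=; lia.
have tlc a b : lead_coef (R ^+ a * S ^+ b) = c ^+ (a + b).
  by rewrite lead_coefM !lead_coef_exp lR lS exprD.
have : T`_(E * m) = c ^+ m *+ m.+1.
  rewrite /T coef_sum; transitivity (\sum_(i < m.+1) c ^+ m).
    2: by rewrite sumr_const card_ord.
  apply: eq_bigr => i _.
  have ei : (m - i + i = m)%N by rewrite subnK // -ltnS.
  have := tsz (m - i)%N i; rewrite ei => szt.
  have := tlc (m - i)%N i; rewrite ei => lt.
  by rewrite -lt lead_coefE szt.
rewrite T0 coef0 => /esym/eqP; rewrite -mulr_natr mulf_eq0 expf_eq0 (negbTE c0) andbF /=.
by rewrite (negbTE m0).
Qed.

Section PolyDick.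
Variables (L : finFieldType) (q n : nat).
Hypothesis q1 : (1 < q)%N.
Hypothesis n0 : (0 < n)%N.
Hypothesis qD : forall x y : L, (x + y) ^+ q = x ^+ q + y ^+ q.
Hypothesis xqn : forall x : L, x ^+ (q ^ n) = x.
Hypothesis cardL : #|L| = (q ^ n)%N.

Definition csub (a : 'I_n -> L) (l : L) : 'I_n -> L :=
  fun k => a k - (if val k == 0%N then l else 0).

Definition Pp (a : 'I_n -> L) : {poly L} :=
  \det (map_mx polyC (dickson_mx q a) + diag_mx (\row_i (- 'X^(q ^ i)))).

Lemma Pp_horner a l : (Pp a).[l] = \det (dickson_mx q (csub a l)).
Proof.
have hE : forall M : 'M[{poly L}]_n, (\det M).[l] = \det (\matrix_(i, j) (M i j).[l]).
  move=> M; rewrite -horner_evalE -det_map_mx; congr (\det _).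
  by apply/matrixP => i j; rewrite !mxE.
rewrite /Pp hE; congr (\det _); apply/matrixP => i j.
rewrite !mxE hornerD hornerC hornerMn hornerN hornerXn.
rewrite /csub (frobB q1 qD) ord_subn0.
case: (eqVneq j i) => [-> | nji]; first by rewrite mulr1n.
by rewrite mulr0n addr0 (frob0 L q1) subr0.
Qed.

Lemma qpoly_csub a l x : qpoly_eval q (csub a l) x = qpoly_eval q a x - l * x.
Proof.
rewrite /qpoly_eval /csub; under eq_bigr => k _ do rewrite mulrBl.
rewrite sumrB; congr (_ - _).
rewrite (bigD1 (Ordinal n0)) //= expn0 expr1 big1 ?addr0 // => k nk.
rewrite (_ : (val k == 0%N) = false) ?mul0r //; apply: contraNF nk => /eqP e.
by apply/eqP/val_inj.
Qed.

Lemma Pp_root a l :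
  ((Pp a).[l] == 0) = [exists x, (x != 0) && (qpoly_eval q a x == l * x)].
Proof.
rewrite Pp_horner (dickson_det0 q1 n0 qD xqn cardL).
by apply: eq_existsb => x; rewrite qpoly_csub subr_eq0.
Qed.

Lemma Pp_K a l : (Pp a).[l] ^+ q = (Pp a).[l].
Proof. by rewrite Pp_horner (det_dickson_q q1 qD xqn). Qed.

Lemma Pp_expand a : Pp a = \sum_(J : {set 'I_n})
   ((-1) ^+ #|~: J| * \det (principal_submx (dickson_mx q a) J)) *: 'X^(eset q (~: J)).
Proof.
rewrite /Pp det_add_diag; apply: eq_bigr => J _.
rewrite /principal_submx -map_mxsub det_map_mx prodrN prodrXr -/(eset q (~: J)).
by rewrite -mul_polyC rmorphM /= rmorph_sign mulrCA mulrA.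
Qed.

Lemma Pp_coef a (T : {set 'I_n}) : (Pp a)`_(eset q T) =
  (-1) ^+ #|T| * \det (principal_submx (dickson_mx q a) (~: T)).
Proof.
rewrite Pp_expand coef_sum (bigD1 (~: T)) //= setCK coefZ coefXn eqxx mulr1.
rewrite big1 ?addr0 // => J nJ; rewrite coefZ coefXn (_ : (_ == _) = false) ?mulr0 //.
apply/negbTE; apply: contra nJ => /eqP /(eset_inj q1) e; by rewrite e setCK.
Qed.

Lemma Pp_coefT a : (Pp a)`_(eset q [set: 'I_n]) = (-1) ^+ n.
Proof.
rewrite Pp_coef cardsT card_ord det0mx ?mulr1 //.
by rewrite setCT cards0.
Qed.

Lemma Pp_size a : size (Pp a) = (eset q [set: 'I_n]).+1.
Proof.
apply/eqP; rewrite eqn_leq; apply/andP; split.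
  rewrite Pp_expand; apply: leq_trans (size_sum _ _ _) _.
  apply/bigmax_leqP => J _; apply: leq_trans (size_scale_leq _ _) _.
  by rewrite size_polyXn ltnS eset_leT.
rewrite ltnNge; apply/negP => /leq_sizeP /(_ _ (leqnn _)).
rewrite Pp_coefT => /eqP; by rewrite signr_eq0.
Qed.

Lemma Pp_lead a : lead_coef (Pp a) = (-1) ^+ n.
Proof. by rewrite lead_coefE Pp_size Pp_coefT. Qed.

End PolyDick.

Lemma pp_scale (L : finFieldType) (x y : L) : x != 0 ->
  proj_point (x, y) = proj_point (1, y / x).
Proof.
move=> x0; apply/setP => w; apply/imsetP/imsetP => [[c _ ->] | [c _ ->]] /=.
  exists (c * x) => //; congr pair; first by rewrite mulr1.
  by rewrite -mulrA (mulrCA x) mulfV // mulr1.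
exists (c / x) => //; congr pair; first by rewrite mulr1 divfK.
by rewrite mulrA mulrAC.
Qed.

Lemma pp_inj (L : finFieldType) : injective (fun l : L => proj_point (1, l)).
Proof.
move=> l1 l2 /= e.
have : ((1, l1) : L * L) \in proj_point (1, l1) by apply/imsetP; exists 1; rewrite ?mul1r.
rewrite e => /imsetP [c _ [c1 ->]]; by rewrite mulr1 in c1; rewrite -c1 mul1r.
Qed.

Definition Sset (L : finFieldType) (f : L -> L) : {set L} :=
  [set l | [exists x, (x != 0) && (f x == l * x)]].

Lemma linset_S (L : finFieldType) (f : L -> L) : f 0 = 0 ->
  linset (graph_set f) = [set proj_point (1, l) | l in Sset f].
Proof.
move=> f0; apply/setP => P; apply/imsetP/imsetP => [[u] | [l]].
  move=> /setD1P [u0 /imsetP [x _ ux]] ->.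
  have x0 : x != 0 by apply: contraNneq u0 => e; rewrite ux e f0.
  exists (f x / x); last by rewrite ux pp_scale.
  rewrite /Sset inE; apply/existsP; exists x; by rewrite x0 /= divfK.
rewrite /Sset inE => /existsP [x /andP [x0 /eqP fx]] ->.
exists (x, f x); last by rewrite (pp_scale (f x) x0) fx mulfK.
apply/setD1P; split; last by apply/imsetP; exists x.
apply: contra x0 => /eqP [->] //.
Qed.

Lemma val_pow (L : finFieldType) q (q1 : (1 < q)%N) (u : L) :
  u ^+ q = u -> u ^+ q.-1 = if u == 0 then 0 else 1.
Proof.
move=> uq; case: (eqVneq u 0) => [-> | u0]; first by rewrite expr0n -subn1 subn_eq0 leqNgt q1.
apply: (mulfI u0); rewrite mulr1 -exprS prednK //; exact: ltnW.
Qed.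

Section Main.
Variables (L : finFieldType) (q n : nat).
Hypothesis q1 : (1 < q)%N.
Hypothesis n0 : (0 < n)%N.
Hypothesis qD : forall x y : L, (x + y) ^+ q = x ^+ q + y ^+ q.
Hypothesis xqn : forall x : L, x ^+ (q ^ n) = x.
Hypothesis cardL : #|L| = (q ^ n)%N.
Hypothesis qchar : (q%:R : L) = 0.

Lemma S_to_P (a b : 'I_n -> L) :
  Sset (qpoly_eval q a) = Sset (qpoly_eval q b) -> Pp q a = Pp q b.
Proof.
move=> eS.
have rt l : ((Pp q a).[l] == 0) = ((Pp q b).[l] == 0).
  rewrite (Pp_root q1 n0 qD xqn cardL) (Pp_root q1 n0 qD xqn cardL).
  by have := congr1 (fun S : {set L} => l \in S) eS; rewrite /Sset !inE.
have qm : q.-1 = (q.-2).+1 by case: (q) q1 => [|[|r]].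
have m0 : ((q.-2).+1%:R : L) != 0.
  have : ((q.-2).+2%:R : L) = 0 by rewrite -qm prednK ?(ltnW q1).
  rewrite mulrS => e; apply/eqP => e'; move: e; rewrite e' addr0 => /eqP.
  by rewrite oner_eq0.
apply: (@poly_pow_eq _ _ _ (eset q [set: 'I_n]) (q.-2) ((-1) ^+ n)).
- exact: (Pp_size q1).
- exact: (Pp_size q1).
- exact: (Pp_lead q1).
- exact: (Pp_lead q1).
- by rewrite signr_eq0.
- exact: m0.
apply/eqP; rewrite -subr_eq0; apply/negPn/negP => D0.
have szP (c : 'I_n -> L) : size (Pp q c ^+ (q.-2).+1) = (q ^ n)%N.
  have P0 : Pp q c != 0 by rewrite -size_poly_eq0 (Pp_size q1).
  rewrite -(prednK (_ : 0 < size (Pp q c ^+ (q.-2).+1))%N) ?size_poly_gt0 ?expf_neq0 //.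
  rewrite size_exp (Pp_size q1) /= esetT -qm mulnC.
  exact: geom (ltnW q1).
have allr : all (root (Pp q a ^+ (q.-2).+1 - Pp q b ^+ (q.-2).+1)) (enum L).
  apply/allP => l _; rewrite /root hornerD hornerN !horner_exp -qm.
  rewrite !(val_pow q1) ?(Pp_K q1 qD xqn) // rt.
  by rewrite subrr.
have := max_poly_roots D0 allr (enum_uniq L).
rewrite -cardE cardL ltnNge => /negP; apply.
by apply: leq_trans (size_polyD _ _) _; rewrite size_polyN !szP maxnn.
Qed.

Lemma P_to_S (a b : 'I_n -> L) :
  Pp q a = Pp q b -> Sset (qpoly_eval q a) = Sset (qpoly_eval q b).
Proof.
move=> e; apply/setP => l; rewrite !inE.
by rewrite -(Pp_root q1 n0 qD xqn cardL) -(Pp_root q1 n0 qD xqn cardL) e.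
Qed.

Lemma P_to_minors (a b : 'I_n -> L) : Pp q a = Pp q b -> forall alpha,
  \det (principal_submx (dickson_mx q a) alpha) =
  \det (principal_submx (dickson_mx q b) alpha).
Proof.
move=> e alpha; have := congr1 (fun P : {poly L} => P`_(eset q (~: alpha))) e.
rewrite /= !(Pp_coef q1) !setCK; exact: (can_inj (signrMK _)).
Qed.

Lemma minors_to_P (a b : 'I_n -> L) : (forall alpha : {set 'I_n}, alpha != set0 ->
  \det (principal_submx (dickson_mx q a) alpha) =
  \det (principal_submx (dickson_mx q b) alpha)) -> Pp q a = Pp q b.
Proof.
move=> H; rewrite !Pp_expand; apply: eq_bigr => J _.
case: (eqVneq J set0) => [-> | J0]; last by rewrite H.
by rewrite !det0mx ?cards0.
Qed.

End Main.

Unset Implicit Arguments.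

Theorem mainTheorem6 (L : finFieldType) (p k q n : nat)
  (hp : prime p) (hk : (0 < k)%N) (hq : q = (p ^ k)%N) (hn : (2 <= n)%N)
  (hL : #|L| = (q ^ n)%N) (a b : 'I_n -> L) :
  linset (graph_set (qpoly_eval q a)) = linset (graph_set (qpoly_eval q b)) <->
  (forall alpha : {set 'I_n}, alpha != set0 ->
     \det (principal_submx (dickson_mx q a) alpha)
     = \det (principal_submx (dickson_mx q b) alpha)).
Proof.
have n0 : (0 < n)%N by apply: leq_trans hn.
have chp : p \in [pchar L].
  apply: (@card_finPcharP L p (k * n)) => //; by rewrite hL hq -expnM.
have q1 : (1 < q)%N.
  rewrite hq; apply: leq_trans (prime_gt1 hp) _.
  by rewrite -{1}(expn1 p) leq_pexp2l // prime_gt0.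
have pD m (x y : L) : (x + y) ^+ (p ^ m) = x ^+ (p ^ m) + y ^+ (p ^ m).
  elim: m x y => [|m IH] x y; first by rewrite expn0 !expr1.
  have fD : (x + y) ^+ p = x ^+ p + y ^+ p.
    by rewrite -!(pFrobenius_autE chp) rmorphD.
  by rewrite expnS !exprM fD IH.
have qD : forall x y : L, (x + y) ^+ q = x ^+ q + y ^+ q by move=> x y; rewrite hq pD.
have xqn : forall x : L, x ^+ (q ^ n) = x by move=> x; rewrite -hL expf_card.
have qchar : (q%:R : L) = 0.
  by rewrite hq natrX (pcharf0 chp) expr0n eqn0Ngt hk.
rewrite !linset_S ?(qpoly0 q1) //.
split => [e | H].
  have eS := imset_inj (@pp_inj L) e.
  move=> alpha _; exact: (P_to_minors q1 (S_to_P q1 n0 qD xqn hL qchar eS)).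
by rewrite (P_to_S q1 n0 qD xqn hL (minors_to_P H)).
Qed.
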